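(* Let $K$ be an arc of bounded rotation in $\mathbb{C}=\mathbb{R}^2$ and let $z=(z_1,z_2):[0,s(K)]\to\mathbb{R}^2$ be its arc length parameterization. Then $z$ is $\delta$-convex: each component $z_i$ ($i=1,2$) can be written as $z_i=g_i-f_i$ where $g_i,f_i:[0,s(K)]\to\mathbb{R}$ are continuous convex functions.
   Context: An arc is the image of a continuous injective map $[a,b]\to\mathbb{C}$, up to increasing reparameterization. A broken line inscribed in $K$ has the same extremities as $K$ and vertices on $K$ ordered along $K$. The absolute rotation of a broken line is the sum over interior vertices of angles in $[0,\pi]$ between directions of consecutive segments; $|\kappa|(K)$ is the supremum of absolute rotations of inscribed broken lines, and $K$ has bounded rotation if $|\kappa|(K)<\infty$. $s(K)$ is the Euclidean length, and the arc length parameterization satisfies $t_2-t_1=s(K|_{t_1,t_2})$. *)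

(* Defs.v *)
From Stdlib Require Import Reals Lra.
Open Scope R_scope.

Definition pt : Type := (R * R)%type.

Definition psub (p q : pt) : pt := (fst p - fst q, snd p - snd q).
Definition dot (u v : pt) : R := fst u * fst v + snd u * snd v.
Definition pnorm (u : pt) : R := sqrt (dot u u).
Definition pdist (p q : pt) : R := pnorm (psub p q).

Definition angle (u v : pt) : R := acos (dot u v / (pnorm u * pnorm v)).

(** [rsum f m n] = f m + f (m+1) + ... + f (n-1)  (0 if n <= m). *)
Fixpoint rsum_aux (f : nat -> R) (m k : nat) : R :=
  match k with
  | O => 0
  | S k' => f m + rsum_aux f (S m) k'
  end.
Definition rsum (f : nat -> R) (m n : nat) : R := rsum_aux f m (n - m).

Definition partition (a b : R) (t : nat -> R) (n : nat) : Prop :=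
  (1 <= n)%nat /\ t O = a /\ t n = b /\
  (forall i, (i < n)%nat -> t i < t (S i)).

Definition continuous_on (a b : R) (f : R -> R) : Prop :=
  forall x, a <= x <= b -> forall eps, 0 < eps -> exists delta, 0 < delta /\
    forall y, a <= y <= b -> Rabs (y - x) < delta -> Rabs (f y - f x) < eps.

Definition pcontinuous_on (a b : R) (g : R -> pt) : Prop :=
  continuous_on a b (fun t => fst (g t)) /\ continuous_on a b (fun t => snd (g t)).

Definition is_arc (gamma : R -> pt) (a b : R) : Prop :=
  a < b /\ pcontinuous_on a b gamma /\
  (forall x y, a <= x <= b -> a <= y <= b -> gamma x = gamma y -> x = y).

Definition polylen (gamma : R -> pt) (t : nat -> R) (n : nat) : R :=
  rsum (fun i => pdist (gamma (t (S i))) (gamma (t i))) 0 n.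

(** Absolute rotation of the inscribed broken line: sum over the interior
    vertices gamma (t i), 1 <= i <= n-1, of the angle in [0,pi] between the
    directions of the consecutive segments. *)
Definition abs_rotation (gamma : R -> pt) (t : nat -> R) (n : nat) : R :=
  rsum (fun i => angle (psub (gamma (t i)) (gamma (t (pred i))))
                       (psub (gamma (t (S i))) (gamma (t i)))) 1 n.

(** Bounded rotation: |kappa|(K) = sup of absolute rotations < +oo. *)
Definition bounded_rotation (gamma : R -> pt) (a b : R) : Prop :=
  exists M, forall t n, partition a b t n -> abs_rotation gamma t n <= M.

Definition is_length (gamma : R -> pt) (c d l : R) : Prop :=
  is_lub (fun x => exists t n, partition c d t n /\ x = polylen gamma t n) l.

Definition arc_length_param (gamma : R -> pt) (a b : R) (z : R -> pt) (L : R) : Prop :=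
  (exists phi : R -> R,
     phi 0 = a /\ phi L = b /\ continuous_on 0 L phi /\
     (forall s1 s2, 0 <= s1 -> s1 < s2 -> s2 <= L -> phi s1 < phi s2) /\
     (forall s, 0 <= s <= L -> z s = gamma (phi s))) /\
  (forall t1 t2, 0 <= t1 -> t1 < t2 -> t2 <= L -> is_length z t1 t2 (t2 - t1)).

Definition convex_on (a b : R) (f : R -> R) : Prop :=
  forall x y lam, a <= x <= b -> a <= y <= b -> 0 <= lam <= 1 ->
    f (lam * x + (1 - lam) * y) <= lam * f x + (1 - lam) * f y.

Definition delta_convex_on (a b : R) (h : R -> R) : Prop :=
  exists g f : R -> R,
    continuous_on a b g /\ convex_on a b g /\
    continuous_on a b f /\ convex_on a b f /\
    (forall s, a <= s <= b -> h s = g s - f s).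

(* Main.v *)
Require Import Defs.
From Stdlib Require Import Reals.
From Stdlib Require Import Lra Lia Classical Arith.
From Coquelicot Require Rbar Lim_seq.
Open Scope R_scope.

Lemma rsum_aux_ext f g m k : (forall i, (m <= i < m + k)%nat -> f i = g i) ->
  rsum_aux f m k = rsum_aux g m k.
Proof.
  revert m; induction k as [|k IH]; intros m H; simpl; [reflexivity|].
  rewrite (H m) by lia. f_equal. apply IH. intros i Hi; apply H; lia.
Qed.

Lemma rsum_ext f g m n : (forall i, (m <= i < n)%nat -> f i = g i) ->
  rsum f m n = rsum g m n.
Proof. intros H; unfold rsum; apply rsum_aux_ext; intros i Hi; apply H; lia. Qed.

Lemma rsum_aux_end f m k : rsum_aux f m (S k) = rsum_aux f m k + f (m + k)%nat.
Proof.
  revert m; induction k as [|k IH]; intros m; simpl.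
  - rewrite Nat.add_0_r; ring.
  - simpl in IH. rewrite IH. replace (S m + k)%nat with (m + S k)%nat by lia. ring.
Qed.

Lemma rsum_empty f m n : (n <= m)%nat -> rsum f m n = 0.
Proof. intros H; unfold rsum; replace (n - m)%nat with 0%nat by lia; reflexivity. Qed.

Lemma rsum_last f m n : (m <= n)%nat -> rsum f m (S n) = rsum f m n + f n.
Proof.
  intros H; unfold rsum. replace (S n - m)%nat with (S (n - m)) by lia.
  rewrite rsum_aux_end. replace (m + (n - m))%nat with n by lia. reflexivity.
Qed.

Lemma rsum_first f m n : (m < n)%nat -> rsum f m n = f m + rsum f (S m) n.
Proof.
  intros H; unfold rsum. replace (n - m)%nat with (S (n - S m)) by lia. reflexivity.
Qed.

Lemma rsum_le f g m n : (forall i, (m <= i < n)%nat -> f i <= g i) ->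
  rsum f m n <= rsum g m n.
Proof.
  induction n as [|n IH]; intros H.
  - rewrite !rsum_empty by lia; lra.
  - destruct (Compare_dec.le_lt_dec m n).
    + rewrite !rsum_last by lia. assert (f n <= g n) by (apply H; lia).
      assert (rsum f m n <= rsum g m n) by (apply IH; intros; apply H; lia). lra.
    + rewrite !rsum_empty by lia; lra.
Qed.

Lemma rsum_nonneg f m n : (forall i, (m <= i < n)%nat -> 0 <= f i) -> 0 <= rsum f m n.
Proof.
  intros H. replace 0 with (rsum (fun _ => 0) m n).
  - apply rsum_le; auto.
  - unfold rsum. generalize (n - m)%nat as k. intros k. generalize m. induction k as [|k IHk]; intros m0; simpl; [reflexivity|]. rewrite IHk; ring.
Qed.

Lemma rsum_plus f g m n : rsum (fun i => f i + g i) m n = rsum f m n + rsum g m n.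
Proof.
  unfold rsum. generalize (n - m)%nat as k. intros k. generalize m. induction k as [|k IHn0]; intros; simpl; [ring|]. rewrite IHn0; ring.
Qed.

Lemma rsum_scal c f m n : rsum (fun i => c * f i) m n = c * rsum f m n.
Proof.
  unfold rsum. generalize (n - m)%nat as k. intros k. generalize m. induction k as [|k IHn0]; intros; simpl; [ring|]. rewrite IHn0; ring.
Qed.

Lemma rsum_opp f m n : rsum (fun i => - f i) m n = - rsum f m n.
Proof.
  unfold rsum. generalize (n - m)%nat as k. intros k. generalize m. induction k as [|k IHn0]; intros; simpl; [ring|]. rewrite IHn0; ring.
Qed.

Lemma rsum_abs f m n : Rabs (rsum f m n) <= rsum (fun i => Rabs (f i)) m n.
Proof.
  unfold rsum. generalize (n - m)%nat as k. intros k. generalize m. induction k as [|k IHn0]; intros; simpl.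
  - rewrite Rabs_R0; lra.
  - eapply Rle_trans; [apply Rabs_triang|]. specialize (IHn0 (S m0)). lra.
Qed.

Lemma rsum_split f m p n : (m <= p <= n)%nat -> rsum f m n = rsum f m p + rsum f p n.
Proof.
  intros [H1 H2]. induction n as [|n IH].
  - assert (p = 0%nat) by lia; subst. rewrite (rsum_empty f 0 0) by lia. ring.
  - destruct (Nat.eq_dec p (S n)).
    + subst. rewrite (rsum_empty f (S n) (S n)) by lia. ring.
    + rewrite !rsum_last by lia. rewrite IH by lia. ring.
Qed.

Lemma rsum_telescope f m n : (m <= n)%nat ->
  rsum (fun i => f (S i) - f i) m n = f n - f m.
Proof.
  intros H; induction H.
  - rewrite rsum_empty by lia; ring.
  - rewrite rsum_last by lia. rewrite IHle. ring.
Qed.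

Lemma rsum_mono_n f m n p : (n <= p)%nat -> (forall i, (m <= i < p)%nat -> 0 <= f i) ->
  rsum f m n <= rsum f m p.
Proof.
  intros H Hf. destruct (Compare_dec.le_lt_dec m n).
  - rewrite (rsum_split f m n p) by lia.
    assert (0 <= rsum f n p) by (apply rsum_nonneg; intros; apply Hf; lia). lra.
  - rewrite (rsum_empty f m n) by lia. apply rsum_nonneg; auto.
Qed.

Definition cvx (f : R -> R) := forall x y lam, 0 <= lam <= 1 ->
  f (lam*x + (1-lam)*y) <= lam * f x + (1-lam) * f y.

Lemma cvx_affine a b : cvx (fun s => a + b*s).
Proof. intros x y lam _. apply Req_le; ring. Qed.

Lemma cvx_hinge c : cvx (fun s => Rmax 0 (s - c)).
Proof.
  intros x y lam Hl. apply Rmax_lub.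
  - assert (0 <= Rmax 0 (x-c)) by apply Rmax_l. assert (0 <= Rmax 0 (y-c)) by apply Rmax_l.
    assert (0 <= lam * Rmax 0 (x-c)) by (apply Rmult_le_pos; lra).
    assert (0 <= (1-lam) * Rmax 0 (y-c)) by (apply Rmult_le_pos; lra). lra.
  - assert (x - c <= Rmax 0 (x-c)) by apply Rmax_r. assert (y - c <= Rmax 0 (y-c)) by apply Rmax_r.
    assert (lam * (x-c) <= lam * Rmax 0 (x-c)) by (apply Rmult_le_compat_l; lra).
    assert ((1-lam) * (y-c) <= (1-lam) * Rmax 0 (y-c)) by (apply Rmult_le_compat_l; lra).
    nra.
Qed.

Lemma cvx_scal c f : 0 <= c -> cvx f -> cvx (fun s => c * f s).
Proof.
  intros Hc Hf x y lam Hl. specialize (Hf x y lam Hl).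
  apply Rmult_le_compat_l with (r := c) in Hf; auto. lra.
Qed.

Lemma cvx_plus f g : cvx f -> cvx g -> cvx (fun s => f s + g s).
Proof. intros Hf Hg x y lam Hl. specialize (Hf x y lam Hl). specialize (Hg x y lam Hl). lra. Qed.

Lemma cvx_rsum F m n : (forall k, cvx (F k)) -> cvx (fun s => rsum (fun k => F k s) m n).
Proof.
  intros HF. induction n as [|n IH].
  - intros x y lam Hl. rewrite !rsum_empty by lia. lra.
  - destruct (Compare_dec.le_lt_dec m n).
    + intros x y lam Hl. rewrite !rsum_last by lia.
      specialize (IH x y lam Hl). specialize (HF n x y lam Hl). simpl in *. lra.
    + intros x y lam Hl. rewrite !rsum_empty by lia. lra.
Qed.

Lemma hinge_lip c x y : Rabs (Rmax 0 (x - c) - Rmax 0 (y - c)) <= Rabs (x - y).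
Proof. unfold Rmax; repeat destruct Rle_dec; unfold Rabs; repeat destruct Rcase_abs; lra. Qed.

Lemma rsum_diff (F : nat -> R -> R) m n x y :
  rsum (fun k => F k x) m n - rsum (fun k => F k y) m n = rsum (fun k => F k x - F k y) m n.
Proof.
  unfold Rminus. rewrite rsum_plus. rewrite rsum_opp. reflexivity.
Qed.

Lemma lip_rsum (c t : nat -> R) m n x y :
  Rabs (rsum (fun k => c k * Rmax 0 (x - t k)) m n - rsum (fun k => c k * Rmax 0 (y - t k)) m n)
  <= rsum (fun k => Rabs (c k)) m n * Rabs (x - y).
Proof.
  rewrite (rsum_diff (fun k s => c k * Rmax 0 (s - t k))).
  eapply Rle_trans; [apply rsum_abs|].
  rewrite Rmult_comm, <- rsum_scal. apply rsum_le. intros i _.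
  replace (c i * Rmax 0 (x - t i) - c i * Rmax 0 (y - t i)) with (c i * (Rmax 0 (x - t i) - Rmax 0 (y - t i))) by ring.
  rewrite Rabs_mult. rewrite Rmult_comm. apply Rmult_le_compat_r; [apply Rabs_pos|]. apply hinge_lip.
Qed.

Definition dlt L n := L / INR n.
Definition tk L n k := INR k * dlt L n.
Definition sl (h : R -> R) L n k := (h (tk L n (S k)) - h (tk L n k)) / dlt L n.
Definition jmp h L n k := sl h L n k - sl h L n (pred k).
Definition Gn h L n s := h 0 + sl h L n 0 * s +
  rsum (fun k => Rmax 0 (jmp h L n k) * Rmax 0 (s - tk L n k)) 1 n.
Definition Fn h L n s := rsum (fun k => Rmax 0 (- jmp h L n k) * Rmax 0 (s - tk L n k)) 1 n.
Definition Hn h L n s := h 0 + sl h L n 0 * s +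
  rsum (fun k => jmp h L n k * Rmax 0 (s - tk L n k)) 1 n.

Lemma rsum_sub f g m n : rsum f m n - rsum g m n = rsum (fun k => f k - g k) m n.
Proof. unfold Rminus. rewrite rsum_plus, rsum_opp. reflexivity. Qed.

Lemma rmax_split d : Rmax 0 d - Rmax 0 (- d) = d.
Proof. unfold Rmax; repeat destruct Rle_dec; lra. Qed.

Lemma GFH h L n s : Gn h L n s - Fn h L n s = Hn h L n s.
Proof.
  unfold Gn, Fn, Hn.
  assert (E: rsum (fun k => Rmax 0 (jmp h L n k) * Rmax 0 (s - tk L n k)) 1 n -
    rsum (fun k => Rmax 0 (- jmp h L n k) * Rmax 0 (s - tk L n k)) 1 n =
    rsum (fun k => jmp h L n k * Rmax 0 (s - tk L n k)) 1 n).
  { rewrite rsum_sub. apply rsum_ext. intros i _.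
    rewrite <- (rmax_split (jmp h L n i)) at 3. ring. }
  lra.
Qed.

Lemma dlt_pos L n : 0 < L -> (1 <= n)%nat -> 0 < dlt L n.
Proof. intros HL Hn. unfold dlt. apply Rdiv_lt_0_compat; auto. apply lt_0_INR; lia. Qed.

Lemma tk_0 L n : tk L n 0 = 0.
Proof. unfold tk; simpl; ring. Qed.

Lemma tk_S L n k : tk L n (S k) = tk L n k + dlt L n.
Proof. unfold tk; rewrite S_INR; ring. Qed.

Lemma tk_n L n : (1 <= n)%nat -> tk L n n = L.
Proof. intros Hn. unfold tk, dlt. field. apply not_0_INR; lia. Qed.

Lemma tk_le L n k k' : 0 < dlt L n -> (k <= k')%nat -> tk L n k <= tk L n k'.
Proof. intros Hd Hk. unfold tk. apply Rmult_le_compat_r; [lra|]. apply le_INR; auto. Qed.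

Lemma tk_nonneg L n k : 0 < dlt L n -> 0 <= tk L n k.
Proof. intros Hd. rewrite <- (tk_0 L n). apply tk_le; auto; lia. Qed.

Lemma sl_mul h L n j : 0 < dlt L n -> h (tk L n (S j)) = h (tk L n j) + sl h L n j * dlt L n.
Proof. intros Hd. unfold sl. field. lra. Qed.

Lemma rsum_zero m n : rsum (fun _ => 0) m n = 0.
Proof. transitivity (rsum (fun i => 0 * (fun _ => 0) i) m n). { apply rsum_ext; intros; simpl; ring. } rewrite rsum_scal. ring. Qed.

Lemma Hpartial h L n j s : 0 < dlt L n ->
  h 0 + sl h L n 0 * s + rsum (fun k => jmp h L n k * (s - tk L n k)) 1 (S j)
  = h (tk L n j) + sl h L n j * (s - tk L n j).
Proof.
  intros Hd. induction j as [|j IH].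
  - rewrite rsum_empty by lia. rewrite tk_0. ring.
  - rewrite rsum_last by lia. rewrite <- Rplus_assoc, IH. unfold jmp. simpl pred.
    rewrite (sl_mul h L n j Hd). rewrite (tk_S L n j). ring.
Qed.

Lemma Hn_eval h L n j s : 0 < dlt L n -> (j < n)%nat -> tk L n j <= s <= tk L n (S j) ->
  Hn h L n s = h (tk L n j) + sl h L n j * (s - tk L n j).
Proof.
  intros Hd Hj Hs. unfold Hn. rewrite (rsum_split _ 1 (S j) n) by lia.
  rewrite (rsum_ext _ (fun _ => 0) (S j) n).
  2:{ intros i Hi. assert (tk L n (S j) <= tk L n i) by (apply tk_le; auto; lia).
      replace (Rmax 0 (s - tk L n i)) with 0. ring. unfold Rmax; destruct Rle_dec; lra. }
  rewrite rsum_zero.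
  rewrite (rsum_ext _ (fun k => jmp h L n k * (s - tk L n k)) 1 (S j)).
  2:{ intros i Hi. assert (tk L n i <= tk L n j) by (apply tk_le; auto; lia).
      replace (Rmax 0 (s - tk L n i)) with (s - tk L n i). ring. unfold Rmax; destruct Rle_dec; lra. }
  rewrite Rplus_0_r. apply Hpartial; auto.
Qed.

Lemma locate L n s : 0 < dlt L n -> 0 <= s -> forall m, (1 <= m)%nat -> s <= tk L n m ->
  exists j, (j < m)%nat /\ tk L n j <= s <= tk L n (S j).
Proof.
  intros Hd Hs m. induction m as [|m IH]; intros Hm Hsm; [lia|].
  destruct (Rle_dec (tk L n m) s).
  - exists m; split; [lia|lra].
  - destruct m as [|m]. { rewrite tk_0 in n0. lra. }
    destruct IH as [j [Hj1 Hj2]]; [lia|lra|]. exists j; split; [lia|lra].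
Qed.

Lemma Hn_approx h L n s : 0 < L -> (1 <= n)%nat ->
  (forall x y, 0 <= x <= L -> 0 <= y <= L -> Rabs (h x - h y) <= Rabs (x - y)) ->
  0 <= s <= L -> Rabs (Hn h L n s - h s) <= 2 * dlt L n.
Proof.
  intros HL Hn Hlip Hs. assert (Hd := dlt_pos L n HL Hn).
  destruct (locate L n s Hd (proj1 Hs) n Hn) as [j [Hj Hjs]]. { rewrite (tk_n L n Hn); lra. }
  rewrite (Hn_eval h L n j s Hd Hj Hjs).
  assert (Hj0 := tk_nonneg L n j Hd).
  assert (HjL : tk L n (S j) <= L). { apply Rle_trans with (tk L n n); [apply tk_le; auto; lia| rewrite (tk_n L n Hn); lra]. }
  assert (HS := tk_S L n j).
  assert (H1 : Rabs (h (tk L n j) - h s) <= dlt L n).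
  { eapply Rle_trans; [apply Hlip; lra|]. rewrite Rabs_left1; lra. }
  assert (H2 : Rabs (sl h L n j) <= 1).
  { unfold sl. unfold Rdiv. rewrite Rabs_mult, Rabs_inv, (Rabs_right (dlt L n)) by lra.
    apply (Rmult_le_reg_r (dlt L n)); auto. rewrite Rmult_assoc, Rinv_l by lra.
    rewrite Rmult_1_r, Rmult_1_l. eapply Rle_trans; [apply Hlip; lra|]. rewrite Rabs_right; lra. }
  assert (H3 : Rabs (sl h L n j * (s - tk L n j)) <= dlt L n).
  { rewrite Rabs_mult. rewrite (Rabs_right (s - _)) by lra.
    apply Rle_trans with (1 * (s - tk L n j)); [apply Rmult_le_compat_r; lra| lra]. }
  replace (h (tk L n j) + sl h L n j * (s - tk L n j) - h s) with
    ((h (tk L n j) - h s) + sl h L n j * (s - tk L n j)) by ring.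
  eapply Rle_trans; [apply Rabs_triang|]. lra.
Qed.

Lemma sl_bound h L n j : 0 < L -> (1 <= n)%nat -> (j < n)%nat ->
  (forall x y, 0 <= x <= L -> 0 <= y <= L -> Rabs (h x - h y) <= Rabs (x - y)) ->
  Rabs (sl h L n j) <= 1.
Proof.
  intros HL Hn Hj Hlip. assert (Hd := dlt_pos L n HL Hn).
  assert (Hj0 := tk_nonneg L n j Hd).
  assert (HjL : tk L n (S j) <= L). { apply Rle_trans with (tk L n n); [apply tk_le; auto; lia| rewrite (tk_n L n Hn); lra]. }
  assert (HS := tk_S L n j).
  unfold sl. unfold Rdiv. rewrite Rabs_mult, Rabs_inv, (Rabs_right (dlt L n)) by lra.
  apply (Rmult_le_reg_r (dlt L n)); auto. rewrite Rmult_assoc, Rinv_l by lra.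
  rewrite Rmult_1_r, Rmult_1_l. eapply Rle_trans; [apply Hlip; lra|]. rewrite Rabs_right; lra.
Qed.

Lemma Gn_cvx h L n : cvx (Gn h L n).
Proof.
  unfold Gn. apply cvx_plus; [apply cvx_affine|].
  apply (cvx_rsum (fun k s => Rmax 0 (jmp h L n k) * Rmax 0 (s - tk L n k))).
  intros k. apply cvx_scal; [apply Rmax_l|apply cvx_hinge].
Qed.

Lemma Fn_cvx h L n : cvx (Fn h L n).
Proof.
  unfold Fn.
  apply (cvx_rsum (fun k s => Rmax 0 (- jmp h L n k) * Rmax 0 (s - tk L n k))).
  intros k. apply cvx_scal; [apply Rmax_l|apply cvx_hinge].
Qed.

Lemma rmax_abs d : Rabs (Rmax 0 d) <= Rabs d.
Proof. unfold Rmax; destruct Rle_dec; unfold Rabs; repeat destruct Rcase_abs; lra. Qed.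

Lemma Gn_lip h L n C x y : 0 < L -> (1 <= n)%nat ->
  (forall x y, 0 <= x <= L -> 0 <= y <= L -> Rabs (h x - h y) <= Rabs (x - y)) ->
  rsum (fun k => Rabs (jmp h L n k)) 1 n <= C ->
  Rabs (Gn h L n x - Gn h L n y) <= (1 + C) * Rabs (x - y).
Proof.
  intros HL Hn Hlip HC. unfold Gn.
  assert (H1 := lip_rsum (fun k => Rmax 0 (jmp h L n k)) (tk L n) 1 n x y). simpl in H1.
  assert (H2 : rsum (fun k => Rabs (Rmax 0 (jmp h L n k))) 1 n <= C).
  { eapply Rle_trans; [|apply HC]. apply rsum_le. intros; apply rmax_abs. }
  assert (H3 := sl_bound h L n 0 HL Hn ltac:(lia) Hlip).
  assert (H4 : Rabs (sl h L n 0 * x - sl h L n 0 * y) <= Rabs (x - y)).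
  { replace (sl h L n 0 * x - sl h L n 0 * y) with (sl h L n 0 * (x - y)) by ring.
    rewrite Rabs_mult. apply Rle_trans with (1 * Rabs (x - y)); [|lra].
    apply Rmult_le_compat_r; [apply Rabs_pos|lra]. }
  assert (H5 : rsum (fun k => Rabs (Rmax 0 (jmp h L n k))) 1 n * Rabs (x - y) <= C * Rabs (x-y)).
  { apply Rmult_le_compat_r; [apply Rabs_pos|lra]. }
  match goal with |- Rabs (?a + ?b + ?c - (?a + ?d + ?e)) <= _ =>
    replace (a + b + c - (a + d + e)) with ((b - d) + (c - e)) by ring end.
  eapply Rle_trans; [apply Rabs_triang|]. lra.
Qed.

Lemma Fn_lip h L n C x y :
  rsum (fun k => Rabs (jmp h L n k)) 1 n <= C ->
  Rabs (Fn h L n x - Fn h L n y) <= C * Rabs (x - y).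
Proof.
  intros HC. unfold Fn.
  assert (H1 := lip_rsum (fun k => Rmax 0 (- jmp h L n k)) (tk L n) 1 n x y). simpl in H1.
  assert (H2 : rsum (fun k => Rabs (Rmax 0 (- jmp h L n k))) 1 n <= C).
  { eapply Rle_trans; [|apply HC]. apply rsum_le. intros. eapply Rle_trans; [apply rmax_abs|].
    rewrite Rabs_Ropp; lra. }
  eapply Rle_trans; [apply H1|]. apply Rmult_le_compat_r; [apply Rabs_pos|lra].
Qed.

Lemma Gn_0 h L n : 0 < dlt L n -> Gn h L n 0 = h 0.
Proof.
  intros Hd. unfold Gn. rewrite (rsum_ext _ (fun _ => 0)). { rewrite rsum_zero; ring. }
  intros i _. assert (Hi := tk_nonneg L n i Hd). replace (Rmax 0 (0 - tk L n i)) with 0. ring.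
  unfold Rmax; destruct Rle_dec; lra.
Qed.

Lemma Fn_0 h L n : 0 < dlt L n -> Fn h L n 0 = 0.
Proof.
  intros Hd. unfold Fn. rewrite (rsum_ext _ (fun _ => 0)). { rewrite rsum_zero; ring. }
  intros i _. assert (Hi := tk_nonneg L n i Hd). replace (Rmax 0 (0 - tk L n i)) with 0. ring.
  unfold Rmax; destruct Rle_dec; lra.
Qed.

Definition LS (u : nat -> R) : R := Rbar.real (Lim_seq.LimSup_seq u).

Lemma LS_spec u B : (forall n, Rabs (u n) <= B) ->
  (forall eps, 0 < eps -> exists N, forall n, (N <= n)%nat -> u n < LS u + eps) /\
  (forall eps, 0 < eps -> forall N, exists n, (N <= n)%nat /\ LS u - eps < u n).
Proof.
  intros HB. unfold LS, Lim_seq.LimSup_seq.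
  destruct (Lim_seq.ex_LimSup_seq u) as [l Hl]. simpl.
  destruct l as [l| |]; simpl in Hl |- *.
  - split.
    + intros eps He. destruct (Hl (mkposreal eps He)) as [_ H]. exact H.
    + intros eps He N. destruct (Hl (mkposreal eps He)) as [H _]. exact (H N).
  - exfalso. destruct (Hl B 0%nat) as [n [_ Hn]]. specialize (HB n).
    unfold Rabs in HB; destruct Rcase_abs in HB; lra.
  - exfalso. destruct (Hl (-B)) as [N HN]. specialize (HN N (le_n N)). specialize (HB N).
    unfold Rabs in HB; destruct Rcase_abs in HB; lra.
Qed.

Lemma LS_le u B c : (forall n, Rabs (u n) <= B) ->
  (exists N, forall n, (N <= n)%nat -> u n <= c) -> LS u <= c.
Proof.
  intros HB [N HN]. destruct (LS_spec u B HB) as [_ H2].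
  destruct (Rle_dec (LS u) c) as [|Hn]; auto. exfalso.
  destruct (H2 (LS u - c) ltac:(lra) N) as [n [Hn1 Hn2]]. specialize (HN n Hn1). lra.
Qed.

Lemma LS_ge u B c : (forall n, Rabs (u n) <= B) ->
  (forall N, exists n, (N <= n)%nat /\ c <= u n) -> c <= LS u.
Proof.
  intros HB HN. destruct (LS_spec u B HB) as [H1 _].
  destruct (Rle_dec c (LS u)) as [|Hn]; auto. exfalso.
  destruct (H1 (c - LS u) ltac:(lra)) as [N HN']. destruct (HN N) as [n [Hn1 Hn2]].
  specialize (HN' n Hn1). lra.
Qed.

Lemma le_eps a b : (forall eps, 0 < eps -> a <= b + eps) -> a <= b.
Proof.
  intros H. destruct (Rle_dec a b) as [|Hn]; auto. specialize (H ((a - b)/2) ltac:(lra)). lra.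
Qed.

Lemma ev_small L eps : 0 < eps -> exists N, forall n, (N <= n)%nat -> 2 * (L / INR (S n)) < eps.
Proof.
  intros He. destruct (INR_unbounded (2 * Rabs L / eps)) as [N H1].
  exists N. intros n Hn.
  assert (INR N <= INR n) by (apply le_INR; auto).
  assert (HS : 0 < INR (S n)) by (apply lt_0_INR; lia). rewrite S_INR in *.
  assert (L <= Rabs L) by apply Rle_abs.
  apply (Rmult_lt_reg_r (INR n + 1)); [lra|].
  unfold Rdiv. rewrite Rmult_assoc, Rmult_assoc, Rinv_l by lra.
  assert (2 * Rabs L < eps * INR N).
  { replace (2 * Rabs L) with ((2*Rabs L/eps)*eps) by (field; lra). nra. }
  nra.
Qed.

Lemma abs_le x b : Rabs x <= b -> - b <= x <= b.
Proof. unfold Rabs; destruct Rcase_abs; lra. Qed.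

Lemma LS_lip (u : nat -> R -> R) L B K x y : 
  (forall n s, 0 <= s <= L -> Rabs (u n s) <= B) ->
  (forall n x y, Rabs (u n x - u n y) <= K * Rabs (x - y)) ->
  0 <= x <= L -> 0 <= y <= L ->
  LS (fun n => u n x) <= LS (fun n => u n y) + K * Rabs (x - y).
Proof.
  intros HB HK Hx Hy. apply le_eps. intros eps He.
  destruct (LS_spec (fun n => u n y) B (fun n => HB n y Hy)) as [H1 _].
  destruct (H1 eps He) as [N HN].
  assert (LS (fun n => u n x) <= LS (fun n => u n y) + eps + K * Rabs (x - y)).
  { apply (LS_le _ B). { intros n; apply HB; auto. }
    exists N. intros n Hn. specialize (HN n Hn). specialize (HK n x y).
    apply abs_le in HK. lra. }
  lra.
Qed.

Lemma LS_cvx (u : nat -> R -> R) L B :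
  (forall n s, 0 <= s <= L -> Rabs (u n s) <= B) ->
  (forall n, cvx (u n)) -> convex_on 0 L (fun s => LS (fun n => u n s)).
Proof.
  intros HB Hc x y lam Hx Hy Hl.
  assert (Hm : 0 <= lam * x + (1 - lam) * y <= L) by nra.
  apply le_eps. intros eps He.
  destruct (LS_spec (fun n => u n x) B (fun n => HB n x Hx)) as [H1 _].
  destruct (LS_spec (fun n => u n y) B (fun n => HB n y Hy)) as [H2 _].
  destruct (H1 eps He) as [N1 HN1]. destruct (H2 eps He) as [N2 HN2].
  apply (LS_le _ B). { intros n; apply HB; auto. }
  exists (N1 + N2)%nat. intros n Hn.
  specialize (HN1 n ltac:(lia)). specialize (HN2 n ltac:(lia)). specialize (Hc n x y lam Hl).
  nra.
Qed.

Lemma lip_cont a b f K : 0 <= K -> (forall x y, a <= x <= b -> a <= y <= b -> Rabs (f x - f y) <= K * Rabs (x - y)) ->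
  continuous_on a b f.
Proof.
  intros HK Hf x Hx eps He. exists (eps / (K + 1)). split.
  { apply Rdiv_lt_0_compat; lra. }
  intros y Hy Hyx. eapply Rle_lt_trans; [apply Hf; auto|].
  apply Rle_lt_trans with ((K+1) * Rabs (y - x)).
  { assert (0 <= Rabs (y - x)) by apply Rabs_pos. nra. }
  replace eps with ((K+1) * (eps / (K+1))) by (field; lra).
  apply Rmult_lt_compat_l; lra.
Qed.

Lemma dc_from_discrete h L C : 0 < L ->
  (forall x y, 0 <= x <= L -> 0 <= y <= L -> Rabs (h x - h y) <= Rabs (x - y)) ->
  (forall n, (1 <= n)%nat -> rsum (fun k => Rabs (jmp h L n k)) 1 n <= C) ->
  delta_convex_on 0 L h.
Proof.
  intros HL Hlip HC.
  assert (C0 : 0 <= C). { specialize (HC 1%nat (le_n 1)). rewrite rsum_empty in HC by lia. lra. }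
  set (uG := fun n s => Gn h L (S n) s). set (uF := fun n s => Fn h L (S n) s).
  assert (Hd : forall n, 0 < dlt L (S n)) by (intros; apply dlt_pos; auto; lia).
  assert (LG : forall n x y, Rabs (uG n x - uG n y) <= (1 + C) * Rabs (x - y)).
  { intros n x y. apply Gn_lip; auto; try lia; apply HC; lia. }
  assert (LF : forall n x y, Rabs (uF n x - uF n y) <= C * Rabs (x - y)).
  { intros n x y. apply Fn_lip; apply HC; lia. }
  assert (BG : forall n s, 0 <= s <= L -> Rabs (uG n s) <= Rabs (h 0) + (1 + C) * L).
  { intros n s Hs. specialize (LG n s 0). unfold uG in *. rewrite Gn_0 in LG by auto.
    rewrite Rminus_0_r, (Rabs_right s) in LG by lra.
    assert (Rabs (Gn h L (S n) s) <= Rabs (h 0) + Rabs (Gn h L (S n) s - h 0)).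
    { replace (Gn h L (S n) s) with (h 0 + (Gn h L (S n) s - h 0)) at 1 by ring. apply Rabs_triang. }
    nra. }
  assert (BF : forall n s, 0 <= s <= L -> Rabs (uF n s) <= C * L).
  { intros n s Hs. specialize (LF n s 0). unfold uF in *. rewrite Fn_0 in LF by auto.
    rewrite !Rminus_0_r, (Rabs_right s) in LF by lra. nra. }
  exists (fun s => LS (fun n => uG n s)), (fun s => LS (fun n => uF n s)).
  split; [|split; [|split; [|split]]].
  - apply (lip_cont _ _ _ (1 + C)); [lra|]. intros x y Hx Hy.
    assert (A1 := LS_lip uG L _ (1+C) x y BG LG Hx Hy).
    assert (A2 := LS_lip uG L _ (1+C) y x BG LG Hy Hx).
    rewrite Rabs_minus_sym in A2. unfold Rabs at 1; destruct Rcase_abs; lra.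
  - apply (LS_cvx uG L _ BG). intros n; apply Gn_cvx.
  - apply (lip_cont _ _ _ C); [lra|]. intros x y Hx Hy.
    assert (A1 := LS_lip uF L _ C x y BF LF Hx Hy).
    assert (A2 := LS_lip uF L _ C y x BF LF Hy Hx).
    rewrite Rabs_minus_sym in A2. unfold Rabs at 1; destruct Rcase_abs; lra.
  - apply (LS_cvx uF L _ BF). intros n; apply Fn_cvx.
  - intros s Hs.
    assert (Happ : forall n, Rabs (uG n s - uF n s - h s) <= 2 * dlt L (S n)).
    { intros n. unfold uG, uF. rewrite GFH. apply Hn_approx; auto; lia. }
    assert (E1 : forall eps, 0 < eps -> LS (fun n => uG n s) <= LS (fun n => uF n s) + h s + eps).
    { intros eps He. destruct (ev_small L (eps/2) ltac:(lra)) as [N1 HN1].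
      destruct (LS_spec (fun n => uF n s) _ (fun n => BF n s Hs)) as [H1 _].
      destruct (H1 (eps/2) ltac:(lra)) as [N2 HN2].
      apply (LS_le _ _ _ (fun n => BG n s Hs)). exists (N1 + N2)%nat. intros n Hn.
      specialize (HN1 n ltac:(lia)). specialize (HN2 n ltac:(lia)). specialize (Happ n).
      apply abs_le in Happ. unfold dlt in Happ. lra. }
    assert (E2 : forall eps, 0 < eps -> LS (fun n => uF n s) + h s <= LS (fun n => uG n s) + eps).
    { intros eps He. destruct (ev_small L (eps/2) ltac:(lra)) as [N1 HN1].
      destruct (LS_spec (fun n => uF n s) _ (fun n => BF n s Hs)) as [_ H2].
      assert (LS (fun n => uF n s) + h s - eps <= LS (fun n => uG n s)); [|lra].
      apply (LS_ge _ _ _ (fun n => BG n s Hs)). intros N.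
      destruct (H2 (eps/2) ltac:(lra) (N1 + N)%nat) as [n [Hn1 Hn2]]. exists n. split; [lia|].
      specialize (HN1 n ltac:(lia)). specialize (Happ n).
      apply abs_le in Happ. unfold dlt in Happ. lra. }
    assert (E1' := le_eps _ _ E1). assert (E2' := le_eps _ _ E2). lra.
Qed.

Lemma dot_self u : dot u u = fst u * fst u + snd u * snd u.
Proof. reflexivity. Qed.

Lemma dot_nonneg u : 0 <= dot u u.
Proof. rewrite dot_self. nra. Qed.

Lemma pnorm_nonneg u : 0 <= pnorm u.
Proof. apply sqrt_pos. Qed.

Lemma pnorm_sq u : pnorm u * pnorm u = dot u u.
Proof. unfold pnorm. apply sqrt_sqrt, dot_nonneg. Qed.

Lemma pnorm_le_of_sq u c : 0 <= c -> dot u u <= c * c -> pnorm u <= c.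
Proof.
  intros Hc H. unfold pnorm. rewrite <- (sqrt_square c Hc). apply sqrt_le_1_alt. auto.
Qed.

Lemma sq_le_of_pnorm u c : pnorm u <= c -> dot u u <= c * c.
Proof. intros H. rewrite <- pnorm_sq. assert (0 <= pnorm u) by apply pnorm_nonneg. nra. Qed.

Lemma cauchy u v : dot u v <= pnorm u * pnorm v.
Proof.
  assert (H1 := pnorm_sq u). assert (H2 := pnorm_sq v).
  assert (H3 := pnorm_nonneg u). assert (H4 := pnorm_nonneg v).
  rewrite dot_self in H1, H2. unfold dot.
  destruct u as [a b], v as [c d]; simpl in *.
  set (nu := pnorm (a, b)) in *. set (nv := pnorm (c, d)) in *.
  assert ((a*c+b*d)*(a*c+b*d) <= (nu*nv)*(nu*nv)).
  { replace ((nu*nv)*(nu*nv)) with ((nu*nu)*(nv*nv)) by ring. rewrite H1, H2.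
    assert (0 <= (a*d-b*c)*(a*d-b*c)) by apply Rle_0_sqr.
    replace ((a * a + b * b) * (c * c + d * d)) with ((a*c+b*d)*(a*c+b*d) + (a*d-b*c)*(a*d-b*c)) by ring. lra. }
  assert (0 <= nu * nv) by nra.
  assert (Rabs (a*c+b*d) <= Rabs (nu*nv)) by (apply Rsqr_le_abs_0; unfold Rsqr; lra).
  rewrite (Rabs_right (nu*nv)) in H5 by lra. assert (a*c+b*d <= Rabs (a*c+b*d)) by apply Rle_abs. lra.
Qed.

Lemma pr_fst u : Rabs (fst u) <= pnorm u.
Proof.
  unfold pnorm. rewrite <- sqrt_Rsqr_abs. apply sqrt_le_1_alt. rewrite dot_self. unfold Rsqr. nra.
Qed.

Lemma pr_snd u : Rabs (snd u) <= pnorm u.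
Proof.
  unfold pnorm. rewrite <- sqrt_Rsqr_abs. apply sqrt_le_1_alt. rewrite dot_self. unfold Rsqr. nra.
Qed.

Lemma pdist_tri p q r : pdist p r <= pdist p q + pdist q r.
Proof.
  unfold pdist. apply pnorm_le_of_sq.
  { assert (0 <= pnorm (psub p q)) by apply pnorm_nonneg. assert (0 <= pnorm (psub q r)) by apply pnorm_nonneg. lra. }
  assert (H1 := pnorm_sq (psub p q)). assert (H2 := pnorm_sq (psub q r)).
  assert (H3 := cauchy (psub p q) (psub q r)).
  set (A := pnorm (psub p q)) in *. set (B := pnorm (psub q r)) in *.
  assert (dot (psub p r) (psub p r) = dot (psub p q) (psub p q) + dot (psub q r) (psub q r) + 2 * dot (psub p q) (psub q r)).
  { unfold dot, psub; simpl; ring. }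
  nra.
Qed.

Lemma pdist_self p : pdist p p = 0.
Proof. unfold pdist, pnorm, dot, psub; simpl. replace (fst p - fst p) with 0 by ring. replace (snd p - snd p) with 0 by ring.
  replace (0*0+0*0) with 0 by ring. apply sqrt_0. Qed.

Definition unitv (d : pt) : pt := (fst d / pnorm d, snd d / pnorm d).

Lemma unitv_norm d : 0 < pnorm d -> dot (unitv d) (unitv d) = 1.
Proof.
  intros H. assert (H1 := pnorm_sq d). rewrite dot_self in H1. unfold unitv, dot; simpl.
  replace (fst d / pnorm d * (fst d / pnorm d) + snd d / pnorm d * (snd d / pnorm d))
    with ((fst d * fst d + snd d * snd d) / (pnorm d * pnorm d)) by (field; lra).
  rewrite <- H1. field. lra.
Qed.

Lemma unitv_pnorm d : 0 < pnorm d -> pnorm (unitv d) = 1.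
Proof. intros H. unfold pnorm at 1. rewrite unitv_norm; auto. apply sqrt_1. Qed.

Lemma unit_dot x y : dot x x = 1 -> dot y y = 1 -> dot x y >= 1 - pdist x y.
Proof.
  intros Hx Hy. unfold pdist.
  assert (H1 := pnorm_sq (psub x y)). assert (H2 := pnorm_nonneg (psub x y)).
  assert (E : dot (psub x y) (psub x y) = dot x x + dot y y - 2 * dot x y) by (unfold dot, psub; simpl; ring).
  assert (H3 := cauchy x y). assert (H4 := cauchy x (psub (0,0) y)).
  assert (pnorm x = 1) by (unfold pnorm; rewrite Hx; apply sqrt_1).
  assert (pnorm (psub (0,0) y) = 1).
  { unfold pnorm. replace (dot (psub (0,0) y) (psub (0,0) y)) with (dot y y) by (unfold dot, psub; simpl; ring).
    rewrite Hy; apply sqrt_1. }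
  assert (dot x (psub (0,0) y) = - dot x y) by (unfold dot, psub; simpl; ring).
  set (D := pnorm (psub x y)) in *.
  assert (HD : D * D = 2 - 2 * dot x y) by lra.
  assert (D <= 2) by nra.
  assert (D * (D - 2) <= 0) by nra. nra.
Qed.

Lemma angle_lemma a b : 0 < pnorm a -> 0 < pnorm b -> pdist (unitv b) (unitv a) <= angle a b.
Proof.
  intros Ha Hb. unfold angle.
  assert (Ux := unitv_norm a Ha). assert (Uy := unitv_norm b Hb).
  set (c := dot a b / (pnorm a * pnorm b)).
  assert (Ec : c = dot (unitv a) (unitv b)).
  { unfold c, unitv, dot; simpl. field. lra. }
  assert (Hc : -1 <= c <= 1).
  { rewrite Ec. assert (H := cauchy (unitv a) (unitv b)).
    assert (H' := cauchy (unitv a) (psub (0,0) (unitv b))).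
    rewrite !unitv_pnorm in H by auto.
    assert (pnorm (unitv a) = 1) by (apply unitv_pnorm; auto).
    assert (pnorm (psub (0,0) (unitv b)) = 1).
    { unfold pnorm. replace (dot (psub (0,0) (unitv b)) (psub (0,0) (unitv b))) with (dot (unitv b) (unitv b)) by (unfold dot, psub; simpl; ring).
      rewrite Uy; apply sqrt_1. }
    assert (dot (unitv a) (psub (0,0) (unitv b)) = - dot (unitv a) (unitv b)) by (unfold dot, psub; simpl; ring).
    nra. }
  assert (Hb0 := acos_bound c). set (al := acos c) in *.
  assert (Hcos : cos al = c) by (apply cos_acos; auto).
  assert (Hs : cos al = 1 - 2 * sin (al/2) * sin (al/2)).
  { rewrite <- cos_2a_sin. f_equal. field. }
  assert (Hsin0 : 0 <= sin (al/2)) by (apply sin_ge_0; lra).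
  assert (Hsin1 : sin (al/2) <= al/2).
  { destruct (Req_dec al 0) as [E|E]. { rewrite E. replace (0/2) with 0 by field. rewrite sin_0; lra. }
    left. apply sin_lt_x. lra. }
  apply pnorm_le_of_sq; [lra|].
  assert (E : dot (psub (unitv b) (unitv a)) (psub (unitv b) (unitv a)) = dot (unitv b) (unitv b) + dot (unitv a) (unitv a) - 2 * dot (unitv a) (unitv b))
    by (unfold dot, psub; simpl; ring).
  rewrite E, Ux, Uy, <- Ec, <- Hcos, Hs. nra.
Qed.

Lemma part_mono c d u m i j : partition c d u m -> (i <= j <= m)%nat -> u i <= u j.
Proof.
  intros [_ [_ [_ Hinc]]] Hij. destruct Hij as [Hij Hjm].
  induction Hij; [lra|]. assert (u m0 < u (S m0)) by (apply Hinc; lia).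
  assert (u i <= u m0) by (apply IHHij; lia). lra.
Qed.

Lemma part_range c d u m i : partition c d u m -> (i <= m)%nat -> c <= u i <= d.
Proof.
  intros Hp Hi. pose proof Hp as [_ [H0 [Hm _]]]. split.
  - rewrite <- H0. apply (part_mono c d u m); auto; lia.
  - rewrite <- Hm. apply (part_mono c d u m); auto.
Qed.

Lemma part_lt c d u m i : partition c d u m -> (i < m)%nat -> u i < u (S i).
Proof. intros [_ [_ [_ H]]] Hi; auto. Qed.

Lemma angle_nonneg a b : 0 <= angle a b.
Proof. unfold angle. apply acos_bound. Qed.

Lemma rot_nonneg z u m : 0 <= abs_rotation z u m.
Proof. unfold abs_rotation. apply rsum_nonneg. intros; apply angle_nonneg. Qed.

Lemma rsum_aux_shift f p a k : rsum_aux f (p + a) k = rsum_aux (fun i => f (p + i)%nat) a k.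
Proof.
  revert a; induction k as [|k IH]; intros a; simpl; [reflexivity|].
  f_equal. replace (S (p + a)) with (p + S a)%nat by lia. apply IH.
Qed.

Lemma rsum_shift f p a b : rsum f (p + a) (p + b) = rsum (fun i => f (p + i)%nat) a b.
Proof. unfold rsum. replace (p + b - (p + a))%nat with (b - a)%nat by lia. apply rsum_aux_shift. Qed.

Definition glue (u1 u2 : nat -> R) (m1 : nat) : nat -> R :=
  fun i => if Nat.leb i m1 then u1 i else u2 (i - m1)%nat.

Lemma glue_part c e d u1 m1 u2 m2 : partition c e u1 m1 -> partition e d u2 m2 ->
  partition c d (glue u1 u2 m1) (m1 + m2).
Proof.
  intros [H1 [H2 [H3 H4]]] [K1 [K2 [K3 K4]]]. unfold glue. split; [lia|split; [|split]].
  - simpl. auto.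
  - destruct (Nat.leb_spec (m1 + m2) m1); [lia|]. replace (m1 + m2 - m1)%nat with m2 by lia. auto.
  - intros i Hi. destruct (Nat.leb_spec i m1); destruct (Nat.leb_spec (S i) m1).
    + apply H4; lia.
    + assert (i = m1) by lia. subst i. replace (S m1 - m1)%nat with 1%nat by lia.
      rewrite H3, <- K2. apply K4; lia.
    + lia.
    + replace (S i - m1)%nat with (S (i - m1)) by lia. apply K4; lia.
Qed.

Lemma glue_rot z c e d u1 m1 u2 m2 : partition c e u1 m1 -> partition e d u2 m2 ->
  abs_rotation z u1 m1 + abs_rotation z u2 m2 <= abs_rotation z (glue u1 u2 m1) (m1 + m2).
Proof.
  intros P1 P2. pose proof P1 as [H1 [H2 [H3 H4]]]. pose proof P2 as [K1 [K2 [K3 K4]]].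
  unfold abs_rotation. rewrite (rsum_split _ 1 m1 (m1 + m2)) by lia.
  rewrite (rsum_first _ m1 (m1 + m2)) by lia.
  assert (E1 : rsum (fun i => angle (psub (z (u1 i)) (z (u1 (pred i)))) (psub (z (u1 (S i))) (z (u1 i)))) 1 m1
    = rsum (fun i => angle (psub (z (glue u1 u2 m1 i)) (z (glue u1 u2 m1 (pred i))))
          (psub (z (glue u1 u2 m1 (S i))) (z (glue u1 u2 m1 i)))) 1 m1).
  { apply rsum_ext. intros i Hi. unfold glue.
    destruct (Nat.leb_spec i m1); [|lia]. destruct (Nat.leb_spec (pred i) m1); [|lia].
    destruct (Nat.leb_spec (S i) m1); [|lia]. reflexivity. }
  assert (E2 : rsum (fun i => angle (psub (z (u2 i)) (z (u2 (pred i)))) (psub (z (u2 (S i))) (z (u2 i)))) 1 m2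
    = rsum (fun i => angle (psub (z (glue u1 u2 m1 i)) (z (glue u1 u2 m1 (pred i))))
          (psub (z (glue u1 u2 m1 (S i))) (z (glue u1 u2 m1 i)))) (S m1) (m1 + m2)).
  { replace (S m1) with (m1 + 1)%nat by lia. rewrite rsum_shift. apply rsum_ext. intros i Hi. unfold glue.
    destruct (Nat.leb_spec (m1 + i) m1); [lia|]. destruct (Nat.leb_spec (S (m1 + i)) m1); [lia|].
    replace (m1 + i - m1)%nat with i by lia. replace (S (m1 + i) - m1)%nat with (S i) by lia.
    destruct (Nat.leb_spec (pred (m1 + i)) m1).
    - assert (i = 1%nat) by lia. subst i. replace (pred (m1 + 1)) with m1 by lia.
      rewrite H3, <- K2. reflexivity.
    - replace (pred (m1 + i) - m1)%nat with (pred i) by lia. reflexivity. }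
  rewrite <- E1, <- E2. assert (H := angle_nonneg
    (psub (z (glue u1 u2 m1 m1)) (z (glue u1 u2 m1 (pred m1))))
    (psub (z (glue u1 u2 m1 (S m1))) (z (glue u1 u2 m1 m1)))). lra.
Qed.

Lemma chord_arc z L p q u m :
  (forall x y, 0 <= x <= L -> 0 <= y <= L -> x < y -> 0 < pnorm (psub (z y) (z x))) ->
  0 <= p -> q <= L -> partition p q u m ->
  (1 - abs_rotation z u m) * polylen z u m <= pnorm (psub (z q) (z p)).
Proof.
  intros Hpos Hp Hq HP. pose proof HP as [Hm [H0 [HmE Hinc]]].
  set (w := fun i => z (u i)).
  set (d := fun i => psub (w (S i)) (w i)).
  set (e := fun i => unitv (d i)).
  assert (Hr : forall i, (i < m)%nat -> 0 < pnorm (d i)).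
  { intros i Hi. unfold d, w. apply Hpos.
    - assert (H := part_range p q u m i HP ltac:(lia)). lra.
    - assert (H := part_range p q u m (S i) HP ltac:(lia)). lra.
    - apply Hinc; auto. }
  assert (Hu : forall i, (i < m)%nat -> dot (e i) (e i) = 1).
  { intros i Hi. apply unitv_norm. auto. }
  set (rot := abs_rotation z u m).
  assert (Hrot0 : 0 <= rot) by apply rot_nonneg.
  assert (Tri : forall i, (i < m)%nat -> pdist (e i) (e 0%nat) <= rsum (fun k => angle (d (pred k)) (d k)) 1 (S i)).
  { induction i as [|i IH]; intros Hi.
    - rewrite pdist_self. rewrite rsum_empty by lia. lra.
    - rewrite rsum_last by lia. simpl pred.
      eapply Rle_trans; [apply (pdist_tri _ (e i))|].
      assert (pdist (e (S i)) (e i) <= angle (d i) (d (S i))).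
      { unfold e. apply angle_lemma; apply Hr; lia. }
      specialize (IH ltac:(lia)). lra. }
  assert (Hdot : forall i, (i < m)%nat -> 1 - rot <= dot (e i) (e 0%nat)).
  { intros i Hi. assert (H1 := unit_dot (e i) (e 0%nat) (Hu i Hi) (Hu 0%nat ltac:(lia))).
    assert (H2 := Tri i Hi).
    assert (H3 : rsum (fun k => angle (d (pred k)) (d k)) 1 (S i) <= rot).
    { unfold rot, abs_rotation.
      rewrite (rsum_ext (fun k => angle (d (pred k)) (d k))
         (fun i0 => angle (psub (z (u i0)) (z (u (pred i0)))) (psub (z (u (S i0))) (z (u i0))))).
      2:{ intros k Hk. unfold d, w. replace (S (pred k)) with k by lia. reflexivity. }
      apply rsum_mono_n; [lia|]. intros; apply angle_nonneg. }
    lra. }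
  assert (S1 : dot (psub (z q) (z p)) (e 0%nat) <= pnorm (psub (z q) (z p))).
  { eapply Rle_trans; [apply cauchy|]. unfold e. rewrite unitv_pnorm by (apply Hr; lia). lra. }
  assert (S2 : dot (psub (z q) (z p)) (e 0%nat) = rsum (fun i => pnorm (d i) * dot (e i) (e 0%nat)) 0 m).
  { rewrite (rsum_ext _ (fun i => fst (e 0%nat) * (fst (w (S i)) - fst (w i)) + snd (e 0%nat) * (snd (w (S i)) - snd (w i)))).
    2:{ intros i Hi. assert (Hri := Hr i ltac:(lia)). assert (Hr0 := Hr 0%nat ltac:(lia)). unfold e, unitv, dot, d, psub in *; simpl in *. field. split; lra. }
    rewrite rsum_plus, !rsum_scal.
    rewrite (rsum_telescope (fun i => fst (w i))) by lia.
    rewrite (rsum_telescope (fun i => snd (w i))) by lia.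
    unfold w. rewrite HmE, H0. unfold dot, psub; simpl. ring. }
  assert (S3 : (1 - rot) * polylen z u m <= rsum (fun i => pnorm (d i) * dot (e i) (e 0%nat)) 0 m).
  { unfold polylen. rewrite <- rsum_scal. apply rsum_le. intros i Hi.
    assert (Hri := Hr i ltac:(lia)). specialize (Hdot i ltac:(lia)).
    change (pdist (z (u (S i))) (z (u i))) with (pnorm (d i)).
    rewrite Rmult_comm. apply Rmult_le_compat_l; lra. }
  lra.
Qed.

Lemma lip_z z L : 
  (forall t1 t2, 0 <= t1 -> t1 < t2 -> t2 <= L -> is_length z t1 t2 (t2 - t1)) ->
  forall x y, 0 <= x -> x < y -> y <= L -> pnorm (psub (z y) (z x)) <= y - x.
Proof.
  intros Hlen x y Hx Hxy Hy. destruct (Hlen x y Hx Hxy Hy) as [Hub _].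
  apply Hub. exists (fun i => match i with O => x | _ => y end), 1%nat. split.
  - split; [lia|split; [reflexivity|split; [reflexivity|]]]. intros i Hi. assert (i = 0%nat) by lia. subst. simpl. lra.
  - unfold polylen, rsum. simpl. unfold pdist. ring.
Qed.

Lemma aux_abs a b x y : 0 <= a <= 1 -> 0 <= b <= 1 -> Rabs x <= 1 -> Rabs y <= 1 ->
  Rabs (a * x - b * y) <= Rabs (x - y) + (1 - a) + (1 - b).
Proof.
  intros Ha Hb Hx Hy.
  replace (a * x - b * y) with (a * (x - y) + (a - b) * y) by ring.
  eapply Rle_trans; [apply Rabs_triang|]. rewrite !Rabs_mult.
  assert (Rabs a <= 1) by (rewrite Rabs_right; lra).
  assert (Rabs a * Rabs (x - y) <= Rabs (x - y)).
  { assert (0 <= Rabs (x-y)) by apply Rabs_pos. assert (0 <= Rabs a) by apply Rabs_pos. nra. }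
  assert (Rabs (a - b) <= (1 - a) + (1 - b)) by (unfold Rabs; destruct Rcase_abs; lra).
  assert (Rabs (a - b) * Rabs y <= Rabs (a - b)).
  { assert (0 <= Rabs (a-b)) by apply Rabs_pos. assert (0 <= Rabs y) by apply Rabs_pos. nra. }
  lra.
Qed.

Definition rho (z : R -> pt) L n k := pnorm (psub (z (tk L n (S k))) (z (tk L n k))) / dlt L n.

Lemma piece z L n k eps :
  0 < L -> (1 <= n)%nat -> (k < n)%nat -> 0 < eps ->
  (forall x y, 0 <= x <= L -> 0 <= y <= L -> x < y -> 0 < pnorm (psub (z y) (z x))) ->
  (forall t1 t2, 0 <= t1 -> t1 < t2 -> t2 <= L -> is_length z t1 t2 (t2 - t1)) ->
  exists u m, partition (tk L n k) (tk L n (S k)) u m /\ 1 - rho z L n k <= abs_rotation z u m + eps.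
Proof.
  intros HL Hn Hk He Hpos Hlen. assert (Hd := dlt_pos L n HL Hn).
  assert (Hk0 := tk_nonneg L n k Hd). assert (HS := tk_S L n k).
  assert (HkL : tk L n (S k) <= L).
  { apply Rle_trans with (tk L n n); [apply tk_le; auto; lia| rewrite (tk_n L n Hn); lra]. }
  assert (Hl := Hlen (tk L n k) (tk L n (S k)) Hk0 ltac:(lra) HkL).
  replace (tk L n (S k) - tk L n k) with (dlt L n) in Hl by lra.
  assert (Hex : exists u m, partition (tk L n k) (tk L n (S k)) u m /\ dlt L n * (1 - eps) < polylen z u m).
  { apply NNPP. intros Hno. destruct Hl as [_ Hlub].
    assert (dlt L n <= dlt L n * (1 - eps)); [|nra].
    apply Hlub. intros v [u [m [Hp Hv]]]. subst v.
    destruct (Rle_dec (polylen z u m) (dlt L n * (1 - eps))) as [|Hc]; auto.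
    exfalso. apply Hno. exists u, m. split; auto. lra. }
  destruct Hex as [u [m [Hp Hpl]]]. exists u, m. split; auto.
  assert (Hca := chord_arc z L _ _ u m Hpos Hk0 HkL Hp).
  assert (Hr0 := rot_nonneg z u m).
  set (r := abs_rotation z u m) in *. set (P := polylen z u m) in *.
  set (ch := pnorm (psub (z (tk L n (S k))) (z (tk L n k)))) in *.
  assert (Hch : 0 <= ch) by apply pnorm_nonneg.
  unfold rho. fold ch.
  assert (Hrho : 0 <= ch / dlt L n) by (unfold Rdiv; apply Rmult_le_pos; [lra| left; apply Rinv_0_lt_compat; lra]).
  destruct (Rle_dec 1 r). { lra. }
  destruct (Rle_dec 1 eps). { lra. }
  assert ((1 - r) * (dlt L n * (1 - eps)) <= ch).
  { eapply Rle_trans; [|apply Hca]. apply Rmult_le_compat_l; lra. }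
  assert ((1 - r) * (1 - eps) <= ch / dlt L n).
  { apply (Rmult_le_reg_r (dlt L n)); auto. replace (ch / dlt L n * dlt L n) with ch by (field; lra). lra. }
  nra.
Qed.

Lemma sum_rho z L M n :
  0 < L -> (1 <= n)%nat ->
  (forall x y, 0 <= x <= L -> 0 <= y <= L -> x < y -> 0 < pnorm (psub (z y) (z x))) ->
  (forall t1 t2, 0 <= t1 -> t1 < t2 -> t2 <= L -> is_length z t1 t2 (t2 - t1)) ->
  (forall u m, partition 0 L u m -> abs_rotation z u m <= M) ->
  rsum (fun k => 1 - rho z L n k) 0 n <= M + 1.
Proof.
  intros HL Hn Hpos Hlen Hrot.
  set (eps := / INR n).
  assert (Hn0 : 0 < INR n) by (apply lt_0_INR; lia).
  assert (He : 0 < eps) by (apply Rinv_0_lt_compat; auto).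
  assert (Claim : forall j, (1 <= j <= n)%nat -> exists u m, partition 0 (tk L n j) u m /\
     rsum (fun k => 1 - rho z L n k) 0 j <= abs_rotation z u m + INR j * eps).
  { intros j Hj. induction j as [|j IH]; [lia|].
    destruct (Nat.eq_dec j 0) as [E|E].
    - subst j. destruct (piece z L n 0 eps HL Hn ltac:(lia) He Hpos Hlen) as [u [m [Hp Hb]]].
      rewrite tk_0 in Hp. exists u, m. split; auto.
      unfold rsum; simpl. lra.
    - destruct IH as [u1 [m1 [Hp1 Hb1]]]; [lia|].
      destruct (piece z L n j eps HL Hn ltac:(lia) He Hpos Hlen) as [u2 [m2 [Hp2 Hb2]]].
      exists (glue u1 u2 m1), (m1 + m2)%nat. split; [eapply glue_part; eauto|].
      assert (G := glue_rot z _ _ _ u1 m1 u2 m2 Hp1 Hp2).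
      rewrite rsum_last by lia. rewrite S_INR. lra. }
  destruct (Claim n ltac:(lia)) as [u [m [Hp Hb]]].
  rewrite (tk_n L n Hn) in Hp. specialize (Hrot u m Hp).
  replace (INR n * eps) with 1 in Hb by (unfold eps; field; lra). lra.
Qed.

Lemma tk_part L n : 0 < L -> (1 <= n)%nat -> partition 0 L (tk L n) n.
Proof.
  intros HL Hn. assert (Hd := dlt_pos L n HL Hn).
  split; [auto|split; [apply tk_0|split; [apply tk_n; auto|]]].
  intros i _. rewrite tk_S. lra.
Qed.

Lemma rsum_pred g n : (1 <= n)%nat -> (forall i, (i < n)%nat -> 0 <= g i) ->
  rsum (fun k => g (pred k)) 1 n <= rsum g 0 n.
Proof.
  intros Hn Hg. destruct n as [|n]; [lia|].
  replace 1%nat with (1 + 0)%nat by lia. replace (S n) with (1 + n)%nat by lia.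
  rewrite rsum_shift. simpl. replace (1 + n)%nat with (S n) by lia.
  change (rsum (fun i => g i) 0 n) with (rsum g 0 n). rewrite (rsum_last g 0 n) by lia. assert (0 <= g n) by (apply Hg; lia). lra.
Qed.

Lemma var_bound z L M n (pr : pt -> R) :
  0 < L -> (1 <= n)%nat ->
  (forall x y, 0 <= x <= L -> 0 <= y <= L -> x < y -> 0 < pnorm (psub (z y) (z x))) ->
  (forall t1 t2, 0 <= t1 -> t1 < t2 -> t2 <= L -> is_length z t1 t2 (t2 - t1)) ->
  (forall u m, partition 0 L u m -> abs_rotation z u m <= M) ->
  (forall p, Rabs (pr p) <= pnorm p) ->
  (forall p q, pr (psub p q) = pr p - pr q) ->
  (forall d, pr (unitv d) = pr d / pnorm d) ->
  rsum (fun k => Rabs (jmp (fun s => pr (z s)) L n k)) 1 n <= 3 * M + 2.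
Proof.
  intros HL Hn Hpos Hlen Hrot P1 P2 P3. assert (Hd := dlt_pos L n HL Hn).
  set (D := fun k => psub (z (tk L n (S k))) (z (tk L n k))).
  assert (Hrng : forall k, (k < n)%nat -> 0 <= tk L n k /\ tk L n (S k) <= L /\ tk L n (S k) = tk L n k + dlt L n).
  { intros k Hk. split; [apply tk_nonneg; auto|split; [|apply tk_S]].
    apply Rle_trans with (tk L n n); [apply tk_le; auto; lia| rewrite (tk_n L n Hn); lra]. }
  assert (HDpos : forall k, (k < n)%nat -> 0 < pnorm (D k)).
  { intros k Hk. destruct (Hrng k Hk) as [A1 [A2 A3]]. unfold D. apply Hpos; lra. }
  assert (Hrho : forall k, (k < n)%nat -> 0 <= rho z L n k <= 1).
  { intros k Hk. destruct (Hrng k Hk) as [A1 [A2 A3]].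
    assert (H := lip_z z L Hlen (tk L n k) (tk L n (S k)) A1 ltac:(lra) A2).
    assert (H0 := HDpos k Hk). unfold D in H0. unfold rho. split.
    - unfold Rdiv; apply Rmult_le_pos; [lra| left; apply Rinv_0_lt_compat; lra].
    - apply (Rmult_le_reg_r (dlt L n)); auto.
      replace (pnorm (psub (z (tk L n (S k))) (z (tk L n k))) / dlt L n * dlt L n) with
        (pnorm (psub (z (tk L n (S k))) (z (tk L n k)))) by (field; lra). lra. }
  assert (Hsl : forall k, (k < n)%nat -> sl (fun s => pr (z s)) L n k = rho z L n k * pr (unitv (D k))).
  { intros k Hk. assert (H0 := HDpos k Hk). unfold sl, rho. rewrite P3. unfold D in *.
    rewrite P2. field. lra. }
  assert (Hx : forall k, (k < n)%nat -> Rabs (pr (unitv (D k))) <= 1).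
  { intros k Hk. eapply Rle_trans; [apply P1|]. rewrite unitv_pnorm; [lra|auto]. }
  assert (Hterm : forall k, (1 <= k < n)%nat -> Rabs (jmp (fun s => pr (z s)) L n k) <=
     angle (D (pred k)) (D k) + (1 - rho z L n k) + (1 - rho z L n (pred k))).
  { intros k Hk. unfold jmp. rewrite !Hsl by lia.
    assert (Hang : Rabs (pr (unitv (D k)) - pr (unitv (D (pred k)))) <= angle (D (pred k)) (D k)).
    { rewrite <- P2. eapply Rle_trans; [apply P1|]. apply angle_lemma; apply HDpos; lia. }
    assert (H := aux_abs (rho z L n k) (rho z L n (pred k)) (pr (unitv (D k))) (pr (unitv (D (pred k))))
       (Hrho k ltac:(lia)) (Hrho (pred k) ltac:(lia)) (Hx k ltac:(lia)) (Hx (pred k) ltac:(lia))).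
    lra. }
  eapply Rle_trans; [apply (rsum_le _ (fun k => angle (D (pred k)) (D k) + (1 - rho z L n k) + (1 - rho z L n (pred k))));
    intros; apply Hterm; lia|].
  rewrite !rsum_plus.
  assert (R1 : rsum (fun k => angle (D (pred k)) (D k)) 1 n <= M).
  { eapply Rle_trans; [|apply (Hrot (tk L n) n (tk_part L n HL Hn))].
    unfold abs_rotation. apply Req_le. apply rsum_ext. intros k Hk. unfold D.
    replace (S (pred k)) with k by lia. reflexivity. }
  assert (S0 := sum_rho z L M n HL Hn Hpos Hlen Hrot).
  assert (R2 : rsum (fun k => 1 - rho z L n k) 1 n <= M + 1).
  { rewrite (rsum_first _ 0 n) in S0 by lia. assert (H := Hrho 0%nat ltac:(lia)). lra. }
  assert (R3 : rsum (fun k => 1 - rho z L n (pred k)) 1 n <= M + 1).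
  { eapply Rle_trans; [apply (rsum_pred (fun k => 1 - rho z L n k))|]; auto.
    intros i Hi. specialize (Hrho i Hi). lra. }
  lra.
Qed.

Lemma pnorm_pos p q : p <> q -> 0 < pnorm (psub p q).
Proof.
  intros Hne. destruct (Rle_lt_or_eq_dec 0 (pnorm (psub p q)) (pnorm_nonneg _)) as [|E]; auto.
  exfalso. apply Hne. symmetry in E. unfold pnorm in E. apply sqrt_eq_0 in E; [|apply dot_nonneg].
  rewrite dot_self in E. destruct p as [p1 p2], q as [q1 q2]. simpl in E.
  assert (A1 : 0 <= (p1 - q1) * (p1 - q1)) by apply Rle_0_sqr.
  assert (A2 : 0 <= (p2 - q2) * (p2 - q2)) by apply Rle_0_sqr.
  assert (B1 : (p1 - q1) * (p1 - q1) = 0) by lra. assert (B2 : (p2 - q2) * (p2 - q2) = 0) by lra.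
  apply Rmult_integral in B1. apply Rmult_integral in B2. f_equal; lra.
Qed.

Theorem proposition2p10 (gamma : R -> pt) (a b : R) (z : R -> pt) (L : R) :
  is_arc gamma a b ->
  bounded_rotation gamma a b ->
  is_length gamma a b L ->
  arc_length_param gamma a b z L ->
  delta_convex_on 0 L (fun s => fst (z s)) /\
  delta_convex_on 0 L (fun s => snd (z s)).
Proof.
  intros [Hab [_ Hinj]] [M HM] HlenG [[phi [Hp0 [HpL [_ [Hmono Hzphi]]]]] Hlen].
  assert (HgL : 0 < L).
  { destruct HlenG as [Hub _].
    assert (pnorm (psub (gamma b) (gamma a)) <= L).
    { apply Hub. exists (fun i => match i with O => a | _ => b end), 1%nat. split.
      - split; [lia|split; [reflexivity|split; [reflexivity|]]]. intros i Hi. assert (i = 0%nat) by lia. subst. simpl. lra.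
      - unfold polylen, rsum. simpl. unfold pdist. ring. }
    assert (0 < pnorm (psub (gamma b) (gamma a))); [|lra].
    apply pnorm_pos. intros E. apply Hinj in E; lra. }
  assert (Hphi : forall s, 0 <= s <= L -> a <= phi s <= b).
  { intros s Hs. destruct (Req_dec s 0) as [E|E]. { subst; lra. }
    destruct (Req_dec s L) as [E'|E']. { subst; lra. }
    assert (phi 0 < phi s) by (apply Hmono; lra). assert (phi s < phi L) by (apply Hmono; lra). lra. }
  assert (Hpos : forall x y, 0 <= x <= L -> 0 <= y <= L -> x < y -> 0 < pnorm (psub (z y) (z x))).
  { intros x y Hx Hy Hxy. apply pnorm_pos. rewrite !Hzphi by auto. intros E.
    apply Hinj in E; try (apply Hphi; auto). assert (phi x < phi y) by (apply Hmono; lra). lra. }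
  assert (Hrot : forall u m, partition 0 L u m -> abs_rotation z u m <= M).
  { intros u m Hp. assert (Hr := part_range 0 L u m).
    assert (Hv : partition a b (fun i => phi (u i)) m).
    { pose proof Hp as [H1 [H2 [H3 H4]]]. split; [auto|split; [rewrite H2; auto|split; [rewrite H3; auto|]]].
      intros i Hi. assert (A1 := Hr i Hp ltac:(lia)). assert (A2 := Hr (S i) Hp ltac:(lia)).
      apply Hmono; try lra. apply H4; auto. }
    eapply Rle_trans; [|apply (HM _ _ Hv)]. apply Req_le. unfold abs_rotation. apply rsum_ext.
    intros i Hi. rewrite !Hzphi; try (apply Hr; auto; lia). reflexivity. }
  assert (Hlip : forall pr : pt -> R, (forall p, Rabs (pr p) <= pnorm p) -> (forall p q, pr (psub p q) = pr p - pr q) ->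
     forall x y, 0 <= x <= L -> 0 <= y <= L -> Rabs (pr (z x) - pr (z y)) <= Rabs (x - y)).
  { intros pr P1 P2 x y Hx Hy. destruct (Rtotal_order x y) as [H|[H|H]].
    - rewrite Rabs_minus_sym, (Rabs_minus_sym x). rewrite <- P2. eapply Rle_trans; [apply P1|].
      rewrite Rabs_right by lra. apply (lip_z z L Hlen); lra.
    - subst. replace (pr (z y) - pr (z y)) with 0 by ring. rewrite Rminus_diag, Rabs_R0; lra.
    - rewrite <- P2. eapply Rle_trans; [apply P1|].
      rewrite Rabs_right by lra. apply (lip_z z L Hlen); lra. }
  split.
  - apply (dc_from_discrete _ L (3 * M + 2) HgL).
    + apply Hlip; [apply pr_fst| reflexivity].
    + intros n Hn. apply (var_bound z L M n fst HgL Hn Hpos Hlen Hrot); [apply pr_fst|reflexivity|reflexivity].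
  - apply (dc_from_discrete _ L (3 * M + 2) HgL).
    + apply Hlip; [apply pr_snd| reflexivity].
    + intros n Hn. apply (var_bound z L M n snd HgL Hn Hpos Hlen Hrot); [apply pr_snd|reflexivity|reflexivity].
Qed.
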